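(* Let $\mathcal{A}=\{A_1,\dots,A_l\}$ be a finite family of real $n\times n$ matrices, each having a strictly dominant eigenvalue $\lambda_i$. For each $i$ let $\hat r_i$ and $\hat h_i$ be arbitrary nonzero right and left eigenvectors of $A_i$ for $\lambda_i$ (so $A_i\hat r_i=\lambda_i\hat r_i$, $\hat h_i^TA_i=\lambda_i\hat h_i^T$). Construct vectors $\tilde h_1,\dots,\tilde h_l$ and $\tilde r_1,\dots,\tilde r_l$ as follows: $\tilde h_1:=\hat h_1$; for each $k$, $\tilde r_k\in\{\hat r_k,-\hat r_k\}$ is chosen such that $\langle\tilde h_1,\tilde r_k\rangle\ge0$; for each $j>1$, $\tilde h_j\in\{\hat h_j,-\hat h_j\}$ is chosen such that $\langle\tilde h_j,\tilde r_j\rangle\ge0$ (any admissible choice when there is ambiguity). Let $\tilde R\in\mathbb{R}^{n\times l}$ have columns $\tilde r_k$ and $\tilde H\in\mathbb{R}^{l\times n}$ have rows $\tilde h_j^T$, and set $\mathcal{K}_{inner}(\mathcal{A}):=\{\tilde Rp:p\ge0\}$, $\mathcal{K}_{outer}(\mathcal{A}):=\{r:\tilde Hr\ge0\}$. Suppose there exists $R\in\mathbb{R}^{n\times m}$ such that $\{Rp:p\ge0\}$ is a proper cone and for each $i$ there exist $\alpha_i\in\mathbb{R}$ and $P_i\in\mathbb{R}^{m\times m}$ with all entries strictly positive such that $(\alpha_iI+A_i)R=RP_i$. Then $\langle\tilde h_j,\tilde r_k\rangle>0$ for all $j,k$, i.e. $\tilde H\tilde R>0$ entrywise; equivalently, every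 $r\in\mathcal{K}_{inner}(\mathcal{A})\setminus\{0\}$ lies in $\operatorname{int}(\mathcal{K}_{outer}(\mathcal{A}))$.
   Context: Inequalities between vectors/matrices are entrywise. A proper cone is a set $\mathcal{K}\subseteq\mathbb{R}^n$ closed under nonnegative linear combinations, with nonempty interior, and such that $r\in\mathcal{K}\setminus\{0\}$ implies $-r\notin\mathcal{K}$. A real square matrix $A$ has a strictly dominant eigenvalue if it has a real, algebraically simple eigenvalue $\lambda$ with $\operatorname{Re}\mu<\lambda$ for every other eigenvalue $\mu$. *)

(* Defs.v *)
(* Reals modelled by an arbitrary real closed field R. *)
From HB Require Import structures.
From mathcomp Require Import all_boot all_order all_algebra.
Set Implicit Arguments. Unset Strict Implicit. Unset Printing Implicit Defensive.
Import Order.TTheory GRing.Theory Num.Theory.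
Local Open Scope ring_scope.

Section Defs.
Variable R : rcfType.

(* Complex numbers modelled as pairs (Re, Im) over R; only used to evaluate
   the characteristic polynomial at complex points. *)
Definition cadd (x y : R * R) : R * R := (x.1 + y.1, x.2 + y.2).
Definition cmul (x y : R * R) : R * R :=
  (x.1 * y.1 - x.2 * y.2, x.1 * y.2 + x.2 * y.1).
Definition ceval (p : {poly R}) (z : R * R) : R * R :=
  foldr (fun c acc => cadd (cmul acc z) (c, 0)) (0, 0) (polyseq p).

(* lam is a real, algebraically simple eigenvalue of A, and every other
   (complex) eigenvalue mu satisfies Re mu < lam. *)
Definition strictly_dominant_eigenvalue (n : nat) (A : 'M[R]_n) (lam : R) : Prop :=
  [/\ eigenvalue A lam,
      ~~ (('X - lam%:P) ^+ 2 %| char_poly A)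
    & forall z : R * R, ceval (char_poly A) z = (0, 0) -> z <> (lam, 0) -> z.1 < lam].

Definition dotv (n : nat) (u v : 'cV[R]_n) : R := \sum_(i < n) u i 0 * v i 0.

(* Proper cone (as in the context), interior taken w.r.t. the standard
   (sup-norm) topology of R^n. *)
Definition proper_cone (n : nat) (K : 'cV[R]_n -> Prop) : Prop :=
  [/\ (forall (x y : 'cV[R]_n) (a b : R), K x -> K y -> 0 <= a -> 0 <= b -> K (a *: x + b *: y)),
      (exists x : 'cV[R]_n, exists2 eps : R, 0 < eps &
          forall y : 'cV[R]_n, (forall i, `|y i 0 - x i 0| < eps) -> K y)
    & (forall r, K r -> r != 0 -> ~ K (- r))].

Definition col_cone (n m : nat) (Rm : 'M[R]_(n, m)) : 'cV[R]_n -> Prop :=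
  fun x => exists2 p : 'cV[R]_m, (forall a, 0 <= p a 0) & x = Rm *m p.

End Defs.

(* Main.v *)
Require Import Defs.
From HB Require Import structures.
From mathcomp Require Import all_boot all_order all_algebra.
From mathcomp Require Import ring lra zify.
Set Implicit Arguments. Unset Strict Implicit. Unset Printing Implicit Defensive.
Import Order.TTheory GRing.Theory Num.Theory.
Local Open Scope ring_scope.


Section Aux.
Variable R : rcfType.

Lemma exists_argmin k (f : 'I_k -> R) (i1 : 'I_k) : exists i0, forall i, f i0 <= f i.
Proof.
have: forall s : seq 'I_k, exists i0, forall i, i \in s -> f i0 <= f i.
  elim => [|a s [i0 H]]; first by exists i1.
  case: (leP (f i0) (f a)) => h.
    by exists i0 => i; rewrite inE => /orP [/eqP->|/H].
  exists a => i; rewrite inE => /orP [/eqP ->|/H] //.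
  by move=> hi; apply: le_trans hi; apply: ltW.
case/(_ (enum 'I_k)) => i0 H; exists i0 => i; apply: H; by rewrite mem_enum.
Qed.

Lemma ratio_lb k (u v : 'cV[R]_k) : (forall i, 0 < u i 0) -> (forall i, 0 < v i 0) ->
  exists2 c, 0 < c & forall i, c * u i 0 <= v i 0.
Proof.
move=> u0 v0; case: k u v u0 v0 => [|k] u v u0 v0.
  by exists 1 => // i; case: i.
have [i0 H] := exists_argmin (fun i => v i 0 / u i 0) ord0.
exists (v i0 0 / u i0 0); first by rewrite divr_gt0.
by move=> i; rewrite -ler_pdivlMr //; exact: H.
Qed.

Lemma mmono k (D : 'M[R]_k) (y : 'cV[R]_k) (rD t : R) :
  (forall i j, 0 <= D i j) -> (forall i, 0 < y i 0) -> D *m y = rD *: y -> rD < t ->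
  forall w : 'cV_k, (forall i, 0 <= ((t%:M - D) *m w) i 0) -> forall i, 0 <= w i 0.
Proof.
move=> D0 y0 Dy lt w Hw i; rewrite leNgt; apply/negP => wi.
have [i0 H] := exists_argmin (fun j => w j 0 / y j 0) i.
set th := w i0 0 / y i0 0 in H.
have thn : th < 0.
  apply: le_lt_trans (H i) _; by rewrite pmulr_llt0 ?invr_gt0.
pose z := w - th *: y.
have z0 : forall j, 0 <= z j 0.
  move=> j; rewrite !mxE subr_ge0 -ler_pdivlMr //; exact: H.
have zi0 : z i0 0 = 0.
  by rewrite !mxE /th divfK ?subrr // gt_eqF.
have e1 : ((t%:M - D) *m z) i0 0 = ((t%:M - D) *m w) i0 0 - th * (t - rD) * y i0 0.
  have ey : (t%:M - D) *m y = (t - rD) *: y by rewrite mulmxBl mul_scalar_mx Dy scalerBl.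
  by rewrite /z mulmxBr -scalemxAr ey !mxE mulrA.
have e2 : ((t%:M - D) *m z) i0 0 <= 0.
  rewrite mulmxBl mul_scalar_mx !mxE.
  have -> : t * (w i0 0 - th * y i0 0) = 0 by move: zi0; rewrite !mxE => ->; rewrite mulr0.
  rewrite sub0r oppr_le0.
  by apply: sumr_ge0 => j _; apply: mulr_ge0.
have : 0 < - th * (t - rD) * y i0 0.
  by rewrite !mulr_gt0 // ?oppr_gt0 // subr_gt0.
have := Hw i0. 
move: e1 e2; set a := ((t%:M - D) *m w) i0 0; set b := th * (t - rD) * y i0 0.
rewrite -!mulNr -/b => -> ; lra.
Qed.

Lemma ivt2 (p : {poly R}) a b : a <= b -> p.[a] * p.[b] <= 0 ->
  exists2 x, a <= x <= b & root p x.
Proof.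
move=> ab h; case: (leP p.[a] 0) => ha.
  case: (leP 0 p.[b]) => hb; first by apply: poly_ivt => //; apply/andP.
  have hb0 : p.[b] <= 0 by apply: ltW.
  case: (ltP p.[a] 0) => ha'.
    by move: h; rewrite nmulr_rle0 // => h; move: (lt_le_trans hb h); rewrite ltxx.
  have pa0 : p.[a] = 0 by apply/eqP; rewrite eq_le ha ha'.
  by exists a; rewrite ?lexx ?ab // /root pa0.
have [x hx] : exists2 x, a <= x <= b & root (- p) x.
  apply: poly_ivt => //; rewrite !hornerN oppr_le0 oppr_ge0 (ltW ha) /=.
  by move: h; rewrite pmulr_rle0.
by rewrite /root hornerN oppr_eq0; exists x.
Qed.

Lemma unit_of_mono k (N : 'M[R]_k) :
  (forall w : 'cV_k, (forall i, 0 <= (N *m w) i 0) -> forall i, 0 <= w i 0) ->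
  N \in unitmx.
Proof.
move=> H; rewrite unitmxE unitfE -det_tr; apply/negP => /det0P [v vn0 vN].
have Nv : N *m v^T = 0 by rewrite -{1}(trmxK N) -trmx_mul vN trmx0.
have h1 : forall i, 0 <= v^T i 0 by apply: H => i; rewrite Nv mxE.
have h2 : forall i, 0 <= (- v^T) i 0 by apply: H => i; rewrite mulmxN Nv oppr0 mxE.
move/negP: vn0; apply; apply/eqP/matrixP => i j; rewrite ord1 !mxE.
have := h1 j; have := h2 j; rewrite !mxE; lra.
Qed.

Lemma cpmx_eval k (D : 'M[R]_k) t :
  map_mx (horner_eval t) (char_poly_mx D) = t%:M - D.
Proof.
apply/matrixP => i j; rewrite !mxE horner_evalE hornerD hornerN hornerMn hornerX hornerC.
by [].
Qed.


Lemma perron m (P : 'M[R]_m.+1) : (forall i j, 0 < P i j) ->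
  exists rho, exists x : 'cV[R]_m.+1,
    [/\ 0 < rho, forall i, 0 < x i 0 & P *m x = rho *: x].
Proof.
elim: m P => [|m IH] P Ppos.
  exists (P 0 0), (const_mx 1); split; first exact: Ppos.
    by move=> i; rewrite mxE.
  by apply/matrixP => i j; rewrite !mxE big_ord1 !ord1 !mxE mulr1.
pose D : 'M_m.+1 := \matrix_(i,j) P (lift ord0 i) (lift ord0 j).
have [rD [yD [rD0 yD0 DyD]]] := IH D (fun i j => ltac:(by rewrite mxE)).
pose a : R := P ord0 ord0.
pose b (j : 'I_m.+1) : R := P ord0 (lift ord0 j).
pose c : 'cV_m.+1 := \col_i P (lift ord0 i) ord0.
have c0 : forall i, 0 < c i 0 by move=> i; rewrite mxE; apply: Ppos.
have a0 : 0 < a by apply: Ppos.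
have b0 : forall j, 0 < b j by move=> j; apply: Ppos.
have D0 : forall i j, 0 <= D i j by move=> i j; rewrite mxE; apply: ltW.
pose N (t : R) : 'M[R]_m.+1 := t%:M - D.
have Nmono : forall (t : R) (w : 'cV[R]_m.+1), rD < t -> (forall i, 0 <= (N t *m w) i 0) -> forall i, 0 <= w i 0.
  move=> t w ht; exact: (mmono D0 yD0 DyD ht).
have Nunit : forall t, rD < t -> N t \in unitmx.
  by move=> t ht; apply: unit_of_mono => w; apply: Nmono.
pose z (t : R) : 'cV[R]_m.+1 := invmx (N t) *m c.
have Nz : forall t, rD < t -> N t *m z t = c.
  by move=> t ht; rewrite /z mulmxA mulmxV ?mul1mx //; apply: Nunit.
have NyD : forall t, N t *m yD = (t - rD) *: yD.
  by move=> t; rewrite mulmxBl mul_scalar_mx DyD scalerBl.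
have [k1 k1p Hk1] := ratio_lb yD0 c0.
have [k2 k2p Hk2] := ratio_lb c0 yD0.
have zlb : forall t, rD < t -> forall i, k1 / (t - rD) * yD i 0 <= z t i 0.
  move=> t ht i; have hp : 0 < t - rD by rewrite subr_gt0.
  have h := Nmono t (z t - (k1 / (t - rD)) *: yD) ht.
  suff /h/(_ i) : forall j, 0 <= (N t *m (z t - (k1 / (t - rD)) *: yD)) j 0.
    by rewrite !mxE subr_ge0.
  move=> j; rewrite mulmxBr -scalemxAr Nz // NyD scalerA divfK ?gt_eqF //.
  by move: (Hk1 j); rewrite !mxE subr_ge0.
have zub : forall t, rD < t -> forall i, z t i 0 <= k2^-1 / (t - rD) * yD i 0.
  move=> t ht i; have hp : 0 < t - rD by rewrite subr_gt0.
  have h := Nmono t ((k2^-1 / (t - rD)) *: yD - z t) ht.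
  suff /h/(_ i) : forall j, 0 <= (N t *m ((k2^-1 / (t - rD)) *: yD - z t)) j 0.
    by rewrite !mxE subr_ge0.
  move=> j; rewrite mulmxBr -scalemxAr Nz // NyD scalerA divfK ?gt_eqF //.
  by move: (Hk2 j); rewrite !mxE subr_ge0 [k2^-1 * _]mulrC ler_pdivlMr // mulrC.
pose f (t : R) : R := a + \sum_j b j * z t j 0.
pose beta := \sum_j b j * yD j 0.
have beta0 : 0 < beta.
  rewrite /beta (bigD1 ord0) //= ltr_pwDl ?mulr_gt0 //.
  by apply: sumr_ge0 => j _; rewrite mulr_ge0 // ltW.
have flb : forall t, rD < t -> a + k1 / (t - rD) * beta <= f t.
  move=> t ht; rewrite lerD2l /beta mulr_sumr; apply: ler_sum => j _.
  by rewrite mulrCA ler_pM2l //; apply: zlb.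
have fub : forall t, rD < t -> f t <= a + k2^-1 / (t - rD) * beta.
  move=> t ht; rewrite lerD2l /beta mulr_sumr; apply: ler_sum => j _.
  by rewrite mulrCA ler_pM2l //; apply: zub.
have k1b : 0 < k1 * beta by rewrite mulr_gt0.
pose del := k1 * beta / (k1 * beta + rD + 1).
have del0 : 0 < del by rewrite divr_gt0 // !addr_gt0.
have del1 : del < 1 by rewrite ltr_pdivrMr ?mul1r ?addr_gt0 // -addrA ltr_pwDr ?addr_gt0.
pose t1 := rD + del.
have ht1 : rD < t1 by rewrite ltr_pwDr.
have f1 : t1 < f t1.
  have := flb t1 ht1.
  have -> : k1 / (t1 - rD) * beta = k1 * beta + rD + 1.
    have -> : t1 - rD = del by rewrite /t1; lra.
    rewrite /del; field; rewrite !gt_eqF // ?addr_gt0 // mulr_gt0.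
  rewrite /t1; lra.
pose q := k2^-1 * beta.
have q0 : 0 < q by rewrite mulr_gt0 ?invr_gt0.
pose t2 := rD + a + q + 1.
have ht2 : rD < t2 by rewrite /t2 -!addrA ltr_pwDr // !addr_gt0.
have f2 : f t2 < t2.
  have := fub t2 ht2.
  have -> : k2^-1 / (t2 - rD) * beta = q / (t2 - rD) by rewrite /q mulrAC.
  have e : t2 - rD = a + q + 1 by rewrite /t2; lra.
  have : q / (t2 - rD) <= q.
    rewrite e ler_pdivrMr ?addr_gt0 //.
    have : 0 <= q * (a + q) by rewrite mulr_ge0 // ltW // addr_gt0.
    move=> h; rewrite mulrDr mulr1; lra.
  rewrite /t2; lra.
have t12 : t1 <= t2.
  rewrite /t1 /t2; lra.
pose Np := char_poly_mx D.
pose G : {poly R} := \det Np * (a%:P - 'X) +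
  \sum_j (b j)%:P * \sum_k (\adj Np) j k * (c k 0)%:P.
have Nev : forall t, map_mx (horner_eval t) Np = N t := cpmx_eval D.
have detev : forall t, (\det Np).[t] = \det (N t).
  by move=> t; rewrite -Nev det_map_mx.
have Gev : forall t, rD < t -> G.[t] = \det (N t) * (f t - t).
  move=> t ht; rewrite /G hornerD hornerM detev horner_sum.
  have -> : \sum_j ((b j)%:P * \sum_k (\adj Np) j k * (c k 0)%:P).[t] =
            \sum_j b j * (\det (N t) * z t j 0).
    apply: eq_bigr => j _; rewrite hornerM hornerC horner_sum; congr (_ * _).
    rewrite /z /invmx (Nunit t ht) -scalemxAl mxE mxE mulr_sumr.
    have dn : \det (N t) != 0 by rewrite -unitfE -unitmxE; apply: Nunit.
    rewrite mulr_sumr; apply: eq_bigr => k _; rewrite hornerM hornerC mulVKf //.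
    congr (_ * _).
    by rewrite -Nev -map_mx_adj [RHS]mxE.
  rewrite /f hornerD hornerN hornerX hornerC.
  under eq_bigr => j _ do rewrite mulrCA.
  rewrite -mulr_sumr; ring.
have dpos : 0 < \det (N t1) * \det (N t2).
  rewrite ltNge; apply/negP => h.
  have [x hx rx] : exists2 x, t1 <= x <= t2 & root (char_poly D) x.
    by apply: ivt2 => //; rewrite /char_poly !detev.
  move: rx; rewrite /root /char_poly detev.
  have : N x \in unitmx.
    by apply: Nunit; case/andP: hx => hx _; apply: lt_le_trans hx.
  by rewrite unitmxE unitfE => /negPf ->.
have [rho hrho rrho] : exists2 x, t1 <= x <= t2 & root G x.
  apply: ivt2 => //; rewrite !Gev // mulrACA; apply: ltW.
  by rewrite pmulr_rlt0 // pmulr_rlt0 ?subr_gt0 // subr_lt0.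
have hr : rD < rho by case/andP: hrho => hx _; apply: lt_le_trans hx.
have frho : f rho = rho.
  move: rrho; rewrite /root Gev // mulf_eq0 subr_eq0 => /orP [|/eqP //].
  have : N rho \in unitmx by apply: Nunit.
  by rewrite unitmxE unitfE => /negPf ->.
pose zr := z rho.
have Nzr : N rho *m zr = c by apply: Nz.
have frho' : a + \sum_j b j * zr j 0 = rho by [].
have zr0 : forall i, 0 < zr i 0.
  move=> i; apply: lt_le_trans (zlb rho hr i).
  by rewrite mulr_gt0 // divr_gt0 // subr_gt0.
clearbody zr.
pose x : 'cV_m.+2 := \col_i (if unlift ord0 i is Some i' then zr i' 0 else 1).
exists rho, x; split.
- exact: lt_trans rD0 hr.
- move=> i; rewrite mxE; case: (unliftP ord0 i) => [i'|] _ //.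
apply/matrixP => i j; rewrite ord1 !mxE big_ord_recl !mxE unlift_none.
under eq_bigr => k _ do rewrite mxE liftK.
case: (unliftP ord0 i) => [i'|] -> /=.
  move/matrixP/(_ i' 0): Nzr; rewrite mulmxBl mul_scalar_mx !mxE.
  have -> : \sum_j0 D i' j0 * zr j0 0 = \sum_k P (lift ord0 i') (lift ord0 k) * zr k 0.
    by apply: eq_bigr => k _; rewrite /D mxE.
  lra.
by rewrite !mulr1 -frho'.
Qed.

End Aux.


Section Aux2.
Variable R : rcfType.

Lemma ceval_real (p : {poly R}) x : ceval p (x, 0) = (p.[x], 0).
Proof.
rewrite /ceval /horner; elim: (polyseq p) => //= c s ->.
by rewrite /cadd /cmul /=; congr pair; ring.
Qed.

Lemma root_of_colvec n (A : 'M[R]_n) (u : 'cV_n) a :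
  u != 0 -> A *m u = a *: u -> root (char_poly A) a.
Proof.
move=> un Au; rewrite /root /char_poly.
have -> : (\det (char_poly_mx A)).[a] = \det (a%:M - A).
  by rewrite -cpmx_eval det_map_mx.
apply/negPn/negP => h.
have hu : (a%:M - A) \in unitmx by rewrite unitmxE unitfE.
move/negP: un; apply; apply/eqP.
have : (a%:M - A) *m u = 0 by rewrite mulmxBl mul_scalar_mx Au subrr.
move/(congr1 (mulmx (invmx (a%:M - A)))); rewrite mulmxA mulVmx // mul1mx => ->.
by rewrite mulmx0.
Qed.

Lemma dotv_mx n (u v : 'cV[R]_n) : dotv u v = (u^T *m v) 0 0.
Proof. by rewrite /dotv mxE; apply: eq_bigr => i _; rewrite mxE. Qed.

Lemma strict_tri k (t : 'I_k -> R) a b : 0 < t a -> t b < 0 ->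
  `|\sum_i t i| < \sum_i `|t i|.
Proof.
move=> ha hb; rewrite ltr_norml; apply/andP; split.
  rewrite -subr_gt0 opprK -big_split /=.
  rewrite (bigD1 a) //=.
  have h0 : 0 <= \sum_(i | i != a) (t i + `|t i|).
    by apply: sumr_ge0 => i _; rewrite addrC -lerBlDr sub0r ler_normr lexx orbT.
  have : 0 < `|t a| + t a by rewrite gtr0_norm // addr_gt0.
  lra.
rewrite -subr_gt0 -sumrN -big_split (bigD1 b) //=.
have h0 : 0 <= \sum_(i | i != b) (`|t i| - t i).
  by apply: sumr_ge0 => i _; rewrite subr_ge0 ler_norm.
have : 0 < `|t b| - t b by rewrite ltr0_norm //; lra.
lra.
Qed.


Lemma sum_lt_one k (F G : 'I_k -> R) a : (forall i, F i <= G i) -> F a < G a ->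
  \sum_i F i < \sum_i G i.
Proof.
move=> h ha; rewrite (bigD1 a) //= [X in _ < X](bigD1 a) //=.
by apply: ltr_leD => //; apply: ler_sum => i _.
Qed.

Lemma nzcol m (g : 'cV[R]_m) : g != 0 -> exists a, g a 0 != 0.
Proof.
move=> gn; case: (boolP [exists a, g a 0 != 0]) => [/existsP //|/existsPn h].
move/negP: gn; case; apply/eqP/matrixP => i j; rewrite ord1 mxE.
by move/negPn/eqP: (h i).
Qed.

Lemma nonneg_case m (P : 'M[R]_m) (g : 'cV[R]_m) nu :
  (forall a b, 0 < P a b) -> (forall a, 0 <= g a 0) -> g != 0 ->
  (forall c, \sum_a g a 0 * P a c = nu * g c 0) -> forall a, 0 < g a 0.
Proof.
move=> Pp g0 gn he c.
have [a0 ha0] := nzcol gn.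
have ga0 : 0 < g a0 0 by rewrite lt_neqAle eq_sym ha0 g0.
have : 0 < nu * g c 0.
  rewrite -he (bigD1 a0) //= ltr_pwDl ?mulr_gt0 //.
  by apply: sumr_ge0 => i _; rewrite mulr_ge0 // ltW.
move=> h; rewrite lt_neqAle g0 andbT; apply/eqP => e; move: h.
by rewrite -e mulr0 ltxx.
Qed.

Lemma sign_lemma m (P : 'M[R]_m) (g x : 'cV[R]_m) nu rho :
  (forall a b, 0 < P a b) -> (forall a, 0 < x a 0) -> P *m x = rho *: x ->
  g^T *m P = nu *: g^T -> g != 0 ->
  [\/ forall a, 0 < g a 0, forall a, g a 0 < 0 | `|nu| < rho].
Proof.
move=> Pp xp Px gP gn.
have he : forall c, \sum_a g a 0 * P a c = nu * g c 0.
  move=> c; move/matrixP/(_ 0 c): gP; rewrite !mxE => <-.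
  by apply: eq_bigr => a _; rewrite mxE.
have Pxe : forall a, \sum_c P a c * x c 0 = rho * x a 0.
  by move=> a; move/matrixP/(_ a 0): Px; rewrite !mxE.
case: (boolP [exists a, 0 < g a 0]) => [/existsP [a ha]|/existsPn hp];
  case: (boolP [exists b, g b 0 < 0]) => [/existsP [b hb]|/existsPn hn].
- apply: Or33.
  have key : forall c, `|nu| * `|g c 0| < \sum_a' `|g a' 0| * P a' c.
    move=> c; rewrite -normrM -he.
    have -> : \sum_a' `|g a' 0| * P a' c = \sum_a' `|g a' 0 * P a' c|.
      by apply: eq_bigr => i _; rewrite normrM (gtr0_norm (Pp i c)).
    by apply: (strict_tri (a := a) (b := b)); rewrite ?pmulr_lgt0 ?pmulr_llt0.
  pose S := \sum_c `|g c 0| * x c 0.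
  have S0 : 0 < S.
    rewrite /S (bigD1 a) //= ltr_pwDl ?mulr_gt0 ?normr_gt0 ?gt_eqF //.
    by apply: sumr_ge0 => i _; rewrite mulr_ge0 // ltW.
  have : `|nu| * S < rho * S.
    have -> : rho * S = \sum_c (\sum_a' `|g a' 0| * P a' c) * x c 0.
      under eq_bigr => c _ do rewrite mulr_suml.
      rewrite exchange_big /S mulr_sumr /=; apply: eq_bigr => i _.
      by under eq_bigr => j _ do rewrite -mulrA; rewrite -mulr_sumr Pxe mulrCA.
    rewrite /S mulr_sumr; apply: (sum_lt_one (a := a)).
      by move=> i; rewrite mulrA ler_pM2r //; apply: ltW.
    by rewrite mulrA ltr_pM2r.
  by rewrite ltr_pM2r.
- apply: Or31; apply: (nonneg_case Pp) => // i.
  by rewrite leNgt; apply: hn.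
- apply: Or32 => i; rewrite -oppr_gt0.
  have := (nonneg_case (g := - g) (nu := nu) Pp) => /(_ _ _ _ i); rewrite mxE; apply.
  + by move=> j; rewrite mxE oppr_ge0 leNgt; apply: hp.
  + by rewrite oppr_eq0.
  + by move=> c; rewrite [in RHS]mxE mulrN -he -sumrN; apply: eq_bigr => j _; rewrite mxE mulNr.
- exfalso; move/negP: gn; apply; apply/eqP/matrixP => i j; rewrite ord1 mxE.
  by apply/eqP; rewrite eq_le leNgt hp /= leNgt hn.
Qed.

End Aux2.


Section Aux3.
Variable R : rcfType.

Definition Pos n m (Rm : 'M[R]_(n,m)) (h : 'cV[R]_n) :=
  forall y, col_cone Rm y -> y != 0 -> 0 < dotv h y.

Lemma dot_R n m (Rm : 'M[R]_(n,m)) (h : 'cV[R]_n) p :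
  dotv h (Rm *m p) = \sum_a (Rm^T *m h) a 0 * p a 0.
Proof.
rewrite dotv_mx mulmxA -[h^T *m Rm]trmxK trmx_mul trmxK mxE.
by apply: eq_bigr => a _; rewrite mxE.
Qed.

Lemma pos_sum m (g p : 'cV[R]_m) : (forall a, 0 < g a 0) -> (forall a, 0 <= p a 0) ->
  p != 0 -> 0 < \sum_a g a 0 * p a 0.
Proof.
move=> gp p0 pn; have [a ha] := nzcol pn.
have pa : 0 < p a 0 by rewrite lt_neqAle eq_sym ha p0.
rewrite (bigD1 a) //= ltr_pwDl ?mulr_gt0 //.
by apply: sumr_ge0 => i _; rewrite mulr_ge0 // ltW.
Qed.

Lemma neg_sum m (g p : 'cV[R]_m) : (forall a, g a 0 < 0) -> (forall a, 0 <= p a 0) ->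
  p != 0 -> \sum_a g a 0 * p a 0 < 0.
Proof.
move=> gp p0 pn; have [a ha] := nzcol pn.
have pa : 0 < p a 0 by rewrite lt_neqAle eq_sym ha p0.
rewrite (bigD1 a) //= ltr_nwDl ?nmulr_rlt0 //.
by apply: sumr_le0 => i _; rewrite nmulr_rle0 // ltW.
Qed.

Lemma pos_of_sign n m (Rm : 'M[R]_(n,m)) (h : 'cV[R]_n) :
  (forall a, 0 < (Rm^T *m h) a 0) -> Pos Rm h.
Proof.
move=> gp y [p p0 ->] yn; rewrite dot_R; apply: pos_sum => //.
by apply: contraNneq yn => ->; rewrite mulmx0.
Qed.

Lemma dotvN n (u v : 'cV[R]_n) : dotv (- u) v = - dotv u v.
Proof. by rewrite /dotv -sumrN; apply: eq_bigr => i _; rewrite mxE mulNr. Qed.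

Lemma dotvNr n (u v : 'cV[R]_n) : dotv u (- v) = - dotv u v.
Proof. by rewrite /dotv -sumrN; apply: eq_bigr => i _; rewrite mxE mulrN. Qed.

End Aux3.


Section Aux4.
Variable R : rcfType.

Lemma nonorth n m (Rm : 'M[R]_(n,m)) : proper_cone (col_cone Rm) ->
  forall h : 'cV[R]_n, h != 0 ->
  exists2 p : 'cV[R]_m, (forall a, 0 <= p a 0) & dotv h (Rm *m p) != 0.
Proof.
move=> [_ [x0 [eps eps0 ball]] _] h hn; have [i hi] := nzcol hn.
pose y := x0 + (eps / 2) *: delta_mx i 0.
have Ky : col_cone Rm y.
  apply: ball => j; rewrite /y !mxE [_ + _]addrC addKr normrM.
  have h1 : `|eps / 2| < eps by rewrite ger0_norm ?divr_ge0 ?ltW //; lra.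
  case: eqP => _ /=; last by rewrite normr0 mulr0.
  by rewrite normr1 mulr1.
have Kx : col_cone Rm x0 by apply: ball => j; rewrite subrr normr0.
have ey : dotv h y = dotv h x0 + eps / 2 * h i 0.
  rewrite !dotv_mx /y mulmxDr -scalemxAr -colE !mxE; congr (_ + _ * _).
case: (eqVneq (dotv h x0) 0) => e.
  case: Ky => p p0 yp; exists p => //; rewrite -yp ey e add0r mulf_neq0 //.
  by rewrite gt_eqF // divr_gt0 //; lra.
by case: Kx => p p0 xp; exists p => //; rewrite -xp.
Qed.


Lemma key n m (Rm : 'M[R]_(n,m)) (A : 'M[R]_n) lam alpha (P : 'M[R]_m)
  (rh hh : 'cV[R]_n) :
  strictly_dominant_eigenvalue A lam ->
  rh != 0 -> A *m rh = lam *: rh ->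
  hh != 0 -> hh^T *m A = lam *: hh^T ->
  proper_cone (col_cone Rm) ->
  (forall a b, 0 < P a b) -> (alpha%:M + A) *m Rm = Rm *m P ->
  (Pos Rm hh \/ Pos Rm (- hh)) /\
  (exists y, [/\ col_cone Rm y, y != 0 & (rh = y \/ rh = - y)]).
Proof.
move=> [eig nsimp dom] rhn Arh hhn Ahh Kp Pp BR.
have no := nonorth Kp.
case: Kp => Kconv _ Kpt.
case: m Rm P Pp BR no Kconv Kpt => [|m] Rm P Pp BR no Kconv Kpt.
  exfalso; have [p _ hp] := no hh hhn; move: hp.
  by rewrite [p]flatmx0 mulmx0 dotv_mx mulmx0 mxE eqxx.
have [rho [x [rho0 xp Px]]] := perron Pp.
pose u := Rm *m x.
have Bu : (alpha%:M + A) *m u = rho *: u.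
  by rewrite /u mulmxA BR -mulmxA Px scalemxAr.
have Au : A *m u = (rho - alpha) *: u.
  by move: Bu; rewrite mulmxDl mul_scalar_mx scalerBl => <-; rewrite addrAC subrr add0r.
have un : u != 0.
  have [p p0 hp] := no hh hhn.
  have Rp0 : Rm *m p != 0 by apply: contraNneq hp => ->; rewrite dotv_mx mulmx0 mxE.
  apply/negP => /eqP u0.
  have [c c0 hc] := ratio_lb (u := p + const_mx 1) (v := x)
    (fun i => ltac:(rewrite !mxE; apply: ltr_wpDl; [exact: p0|exact: ltr01])) xp.
  apply: (Kpt _ _ Rp0); first by exists p.
  exists (c^-1 *: x - p).
    move=> a; rewrite !mxE subr_ge0; move: (hc a); rewrite !mxE.
    rewrite -ler_pdivlMl // => h; apply: le_trans h; rewrite lerDl //.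
  by rewrite mulmxBr -scalemxAr -/u u0 scaler0 sub0r.
have rootA : root (char_poly A) (rho - alpha) by apply: root_of_colvec Au.
have domc : rho - alpha = lam \/ rho - alpha < lam.
  case: (eqVneq (rho - alpha) lam) => e; [by left|right].
  have := dom (rho - alpha, 0); rewrite ceval_real (eqP rootA); apply => //.
  by case=> e'; move: e; rewrite e' eqxx.
have leftsign : forall h : 'cV_n, h != 0 -> h^T *m A = lam *: h^T ->
    (forall a, 0 < (Rm^T *m h) a 0) \/ (forall a, (Rm^T *m h) a 0 < 0).
  move=> h hn hA; set g := Rm^T *m h.
  have gT : g^T = h^T *m Rm by rewrite trmx_mul trmxK.
  have gP : g^T *m P = (alpha + lam) *: g^T.
    rewrite gT -mulmxA -BR mulmxA mulmxDr mul_mx_scalar hA -scalerDl.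
    by rewrite -scalemxAl addrC.
  have gn : g != 0.
    have [p _ hp] := no h hn; apply: contraNneq hp => g0.
    by rewrite dot_R -/g g0 big1 // => a _; rewrite mxE mul0r.
  case: (sign_lemma Pp xp Px gP gn) => [h1|h2|h3]; [by left|by right|exfalso].
  have := ler_norm (alpha + lam); case: domc => e; lra.
have hu_nz : forall h : 'cV_n, h != 0 -> h^T *m A = lam *: h^T -> dotv h u != 0.
  move=> h hn hA; rewrite /u dot_R.
  have xn : x != 0 by apply/eqP => x0; move: (xp 0); rewrite x0 mxE ltxx.
  have xp' : forall a, 0 <= x a 0 by move=> a; apply: ltW.
  case: (leftsign h hn hA) => [gp|gn].
    by rewrite gt_eqF // pos_sum.
  by rewrite lt_eqF // neg_sum.
have rho_eq : rho - alpha = lam.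
  have := hu_nz hh hhn Ahh; rewrite !dotv_mx mxE => hn.
  have : (hh^T *m (A *m u)) 0 0 = ((hh^T *m A) *m u) 0 0 by rewrite mulmxA.
  rewrite Au Ahh -scalemxAr -scalemxAl !mxE => /eqP; rewrite -subr_eq0 -mulrBl.
  by rewrite mulf_eq0 (negbTE hn) orbF subr_eq0 => /eqP.
split.
  case: (leftsign hh hhn Ahh) => [gp|gn]; [left|right]; apply: pos_of_sign => //.
  by move=> a; rewrite mulmxN mxE oppr_gt0.
pose M := lam%:M - A.
have Mu : M *m u = 0 by rewrite mulmxBl mul_scalar_mx Au rho_eq subrr.
have Mrh : M *m rh = 0 by rewrite mulmxBl mul_scalar_mx Arh subrr.
have rankU : (\rank (kermx M) <= 1)%N.
  rewrite leqNgt; apply/negP => h2.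
  have e := mxrank_mul_ker (kermx M) u.
  have r1 := rank_leq_col (kermx M *m u).
  set W := (kermx M :&: kermx u)%MS in e.
  have Wn : W != 0 by rewrite -mxrank_eq0; apply/eqP => W0; move: e; rewrite W0 addn0 => e; move: r1 h2; rewrite e; lia.
  pose y := nz_row W.
  have yn : y != 0 by rewrite nz_row_eq0.
  have yU : (y <= kermx M)%MS := submx_trans (nz_row_sub W) (capmxSl _ _).
  have yk : (y <= kermx u)%MS := submx_trans (nz_row_sub W) (capmxSr _ _).
  move/sub_kermxP: yU => yM; move/sub_kermxP: yk => yu.
  have hA : (y^T)^T *m A = lam *: (y^T)^T.
    by move: yM; rewrite trmxK mulmxBr mul_mx_scalar => /eqP; rewrite subr_eq0 => /eqP.
  have := hu_nz y^T; rewrite trmx_eq0 => /(_ yn hA); rewrite dotv_mx trmxK yu mxE.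
  by rewrite eqxx.
have rankV : (\rank (kermx M^T) <= 1)%N by rewrite mxrank_ker mxrank_tr -mxrank_ker.
have uV : (u^T <= kermx M^T)%MS by apply/sub_kermxP; rewrite -trmx_mul Mu trmx0.
have rV : (rh^T <= kermx M^T)%MS by apply/sub_kermxP; rewrite -trmx_mul Mrh trmx0.
have Vu : (kermx M^T <= u^T)%MS.
  case: (mxrank_leqif_sup uV) => _ <-.
  rewrite rank_rV trmx_eq0 un eqn_leq rankV andbT.
  by have := mxrankS uV; rewrite rank_rV trmx_eq0 un.
have /sub_rVP [c hc] : (rh^T <= u^T)%MS := submx_trans rV Vu.
have rhc : rh = c *: u.
  by apply/matrixP => i j; rewrite ord1; move/matrixP/(_ 0 i): hc; rewrite !mxE.
have cn : c != 0 by apply: contraNneq rhn => c0; rewrite rhc c0 scale0r.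
have xp' : forall a, 0 <= x a 0 by move=> a; apply: ltW.
case: (ltrgtP c 0) => hc0; last by move: cn; rewrite hc0 eqxx.
  exists (- rh); split.
  - exists ((- c) *: x); first by move=> a; rewrite mxE mulr_ge0 // oppr_ge0 ltW.
    by rewrite rhc -scalemxAr scaleNr.
  - by rewrite oppr_eq0.
  - by right; rewrite opprK.
exists rh; split => //; last by left.
exists (c *: x); first by move=> a; rewrite mxE mulr_ge0 // ltW.
by rewrite rhc -scalemxAr.
Qed.

End Aux4.

Unset Implicit Arguments.

Theorem proposition7 (R : rcfType) (n l : nat) (hl : (0 < l)%N)
  (A : 'I_l -> 'M[R]_n) (lam : 'I_l -> R)
  (rhat hhat rt ht : 'I_l -> 'cV[R]_n) :
  (forall i, strictly_dominant_eigenvalue (A i) (lam i)) ->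
  (forall i, rhat i != 0 /\ A i *m rhat i = lam i *: rhat i) ->
  (forall i, hhat i != 0 /\ (hhat i)^T *m A i = lam i *: (hhat i)^T) ->
  (* construction of the tilde vectors; index 1 of the paper is Ordinal hl *)
  ht (Ordinal hl) = hhat (Ordinal hl) ->
  (forall k, (rt k = rhat k \/ rt k = - rhat k) /\
             0 <= dotv (ht (Ordinal hl)) (rt k)) ->
  (forall j, j != Ordinal hl ->
             (ht j = hhat j \/ ht j = - hhat j) /\ 0 <= dotv (ht j) (rt j)) ->
  (exists m (Rm : 'M[R]_(n, m)),
      proper_cone (col_cone Rm) /\
      forall i, exists (alpha : R) (P : 'M[R]_m),
        (forall a b, 0 < P a b) /\ (alpha%:M + A i) *m Rm = Rm *m P) ->
  forall j k, 0 < dotv (ht j) (rt k).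
Proof.
move=> hsd hr hh ht1 hrt hht [m [Rm [Kp Hi]]].
set o := Ordinal hl in ht1 hrt hht *.
have Ki : forall i, (Pos Rm (hhat i) \/ Pos Rm (- hhat i)) /\
    exists y, [/\ col_cone Rm y, y != 0 & (rhat i = y \/ rhat i = - y)].
  move=> i; have [alpha [P [Pp BR]]] := Hi i.
  case: (hr i) => rn Ar; case: (hh i) => hn Ah.
  exact: (key (hsd i) rn Ar hn Ah Kp Pp BR).
have hpm : forall j, Pos Rm (ht j) \/ Pos Rm (- ht j).
  move=> j; case: (eqVneq j o) => [->|jo]; first by rewrite ht1; case: (Ki o).
  case: (hht j jo) => [[->|->] _]; case: (Ki j) => [[h|h] _];
    [left|right|right|left] => //; by rewrite opprK.
have rpm : forall k, exists y, [/\ col_cone Rm y, y != 0 & (rt k = y \/ rt k = - y)].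
  move=> k; case: (Ki k) => _ [y [Ky yn hy]]; exists y; split => //.
  case: (hrt k) => [[->|->] _]; case: hy => ->; [left|right|right|left] => //.
  by rewrite opprK.
case: (hpm o) => ho.
- have rK : forall k, col_cone Rm (rt k) /\ rt k != 0.
    move=> k; have [y [Ky yn [e|e]]] := rpm k; first by rewrite e.
    exfalso; case: (hrt k) => _; rewrite e dotvNr oppr_ge0 leNgt (ho _ Ky yn).
    by [].
  move=> j k; case: (hpm j) => hj; first by case: (rK k) => h1 h2; apply: hj.
  exfalso; case: (eqVneq j o) => [e|jo].
    by case: (rK k) => h1 h2; have := hj _ h1 h2; have := ho _ h1 h2; rewrite e dotvN; lra.
  case: (hht j jo) => _; case: (rK j) => h1 h2; have := hj _ h1 h2; rewrite dotvN; lra.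
- have rK : forall k, col_cone Rm (- rt k) /\ - rt k != 0.
    move=> k; have [y [Ky yn [e|e]]] := rpm k; last by rewrite e opprK.
    exfalso; case: (hrt k) => _; rewrite e -[y]opprK dotvNr oppr_ge0 leNgt.
    by rewrite dotvNr -dotvN (ho _ Ky yn).
  move=> j k; case: (hpm j) => hj.
    exfalso; case: (eqVneq j o) => [e|jo].
      case: (rK k) => h1 h2; have := hj _ h1 h2; have := ho _ h1 h2.
      by rewrite e dotvN; lra.
    case: (hht j jo) => _; case: (rK j) => h1 h2; have := hj _ h1 h2; rewrite dotvNr; lra.
  by case: (rK k) => h1 h2; have := hj _ h1 h2; rewrite dotvN dotvNr opprK.
Qed.
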